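(* Let $L=\langle S,A,\to\rangle$ be a labelled transition system and $x,y\in\{o,b\}$. Then $\mathrel{\underline{\leftrightarrow}}^{ed}_{(x,y)}$ has the stuttering property: whenever $t_0\xrightarrow{\tau}t_1\xrightarrow{\tau}\cdots\xrightarrow{\tau}t_k$ with $t_0\mathrel{\underline{\leftrightarrow}}^{ed}_{(x,y)}t_k$, then $t_i\mathrel{\underline{\leftrightarrow}}^{ed}_{(x,y)}t_j$ for all $0\le i,j\le k$.
   Context: An LTS is $\langle S,A,\to\rangle$ with states $S$, actions $A$ containing the internal action $\tau$, and $\to\subseteq S\times A\times S$; write $s\xrightarrow{a}t$, $\twoheadrightarrow$ for the reflexive-transitive and $\twoheadrightarrow^+$ for the transitive closure of $\xrightarrow{\tau}$. For $R\subseteq S\times S$ and $s,s',t$: $s\twoheadrightarrow_{o,R,t}s'$ iff $s\twoheadrightarrow s'$; $s\twoheadrightarrow_{b,R,t}s'$ iff $s\twoheadrightarrow s'$, $t\,R\,s$ and $t\,R\,s'$. For $x,y\in\{o,b\}$, a symmetric $R$ is an $(x,y)$-generic bisimulation if whenever $s\,R\,t$ and $s\xrightarrow{a}s'$, either $a=\tau$ and $s'\,R\,t$, or there exist $t',t_1,t_2$ with $t\twoheadrightarrow_{x,R,s}t_1\xrightarrow{a}t_2\twoheadrightarrow_{y,R,s'}t'$ and $s'\,R\,t'$. $R$ is an $(x,y)$-generic bisimulation with explicit divergence if it is an $(x,y)$-generic bisimulation and for all $s\,R\,t$, if there is an infinite sequence $s=s_0\xrightarrow{\tau}s_1\xrightarrow{\tau}s_2\cdots$,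 then there exist $t'$ with $t\twoheadrightarrow^+t'$ and some $k$ with $s_k\,R\,t'$. $s\mathrel{\underline{\leftrightarrow}}^{ed}_{(x,y)}t$ iff some such relation relates $s$ and $t$. *)

(* Defs.v *)
From Stdlib Require Import Relations.

Record LTS := {
  St : Type;
  Act : Type;
  tau : Act;
  step : St -> Act -> St -> Prop
}.

Inductive mode := mo | mb.

Section Defs.
Variable L : LTS.

Definition tau_step (s t : St L) : Prop := step L s (tau L) t.

Definition taus : relation (St L) := clos_refl_trans (St L) tau_step.
Definition taus_plus : relation (St L) := clos_trans (St L) tau_step.

(* gen_reach m R t s s'  is  s ->>_{m,R,t} s' *)
Definition gen_reach (m : mode) (R : relation (St L)) (t s s' : St L) : Prop :=
  match m with
  | mo => taus s s'
  | mb => taus s s' /\ R t s /\ R t s'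
  end.

Definition gen_bisim (x y : mode) (R : relation (St L)) : Prop :=
  (forall s t, R s t -> R t s) /\
  (forall s t a s', R s t -> step L s a s' ->
     (a = tau L /\ R s' t) \/
     exists t' t1 t2,
       gen_reach x R s t t1 /\ step L t1 a t2 /\ gen_reach y R s' t2 t' /\ R s' t').

Definition gen_bisim_ed (x y : mode) (R : relation (St L)) : Prop :=
  gen_bisim x y R /\
  (forall s t, R s t ->
     forall f : nat -> St L, f 0 = s -> (forall n, tau_step (f n) (f (S n))) ->
     exists t' k, taus_plus t t' /\ R (f k) t').

Definition bisim_ed (x y : mode) (s t : St L) : Prop :=
  exists R, gen_bisim_ed x y R /\ R s t.

End Defs.

(* Main.v *)
Require Import Defs.
From Stdlib Require Import Arith.
From Stdlib Require Import Relations Lia.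

Section Aux.
Variable L : LTS.
Variables x y : mode.

Definition semi_bisim (R : relation (St L)) : Prop :=
  (forall s t, R s t -> R t s) /\
  (forall s t a s', R s t -> step L s a s' ->
     (a = tau L /\ exists t1 t', gen_reach L x R s t t1 /\ gen_reach L y R s' t1 t' /\ R s' t') \/
     exists t' t1 t2,
       gen_reach L x R s t t1 /\ step L t1 a t2 /\ gen_reach L y R s' t2 t' /\ R s' t').

Definition divg (R : relation (St L)) : Prop :=
  forall s t, R s t ->
     forall f : nat -> St L, f 0 = s -> (forall n, tau_step L (f n) (f (S n))) ->
     exists t' k, taus_plus L t t' /\ R (f k) t'.

Definition semi_ed R := semi_bisim R /\ divg R.
Definition sim s t := exists R, semi_ed R /\ R s t.

Lemma reach_mono m (R R' : relation (St L)) :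
  (forall a b, R a b -> R' a b) -> forall t s s', gen_reach L m R t s s' -> gen_reach L m R' t s s'.
Proof. destruct m; simpl; firstorder. Qed.

Lemma reach_taus m R t s s' : gen_reach L m R t s s' -> taus L s s'.
Proof. destruct m; simpl; tauto. Qed.

Lemma semi_sub R : semi_ed R -> forall a b, R a b -> sim a b.
Proof. intros H a b Hab; exists R; auto. Qed.

Lemma sim_sym s t : sim s t -> sim t s.
Proof. intros [R [[[Hs Ht] Hd] H]]. exists R; split; [split; [split|]|]; auto. Qed.

Lemma sim_step s t a s' : sim s t -> step L s a s' ->
     (a = tau L /\ exists t1 t', gen_reach L x sim s t t1 /\ gen_reach L y sim s' t1 t' /\ sim s' t') \/
     exists t' t1 t2,
       gen_reach L x sim s t t1 /\ step L t1 a t2 /\ gen_reach L y sim s' t2 t' /\ sim s' t'.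
Proof.
  intros [R [HR H]] Hst. pose proof (semi_sub R HR) as Hsub.
  destruct HR as [[Hs Ht] Hd].
  destruct (Ht _ _ _ _ H Hst) as [[Ha [t1 [t' [A [B C]]]]]|[t' [t1 [t2 [A [B [C D]]]]]]].
  - left; split; auto. exists t1, t'. split; [|split]; try eapply reach_mono; eauto.
  - right. exists t', t1, t2. split; [|split; [|split]]; try eapply reach_mono; eauto.
Qed.

Lemma sim_div : divg sim.
Proof.
  intros s t [R [HR H]] f Hf0 Hf. pose proof (semi_sub R HR) as Hsub.
  destruct HR as [_ Hd]. destruct (Hd _ _ H f Hf0 Hf) as [t' [k [A B]]].
  exists t', k; auto.
Qed.

Lemma sim_path s s1 : taus L s s1 -> forall t, sim s t -> exists t1, taus L t t1 /\ sim s1 t1.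
Proof.
  unfold taus. induction 1 as [a b Hab|a|a b c _ IH1 _ IH2]; intros t H.
  - destruct (sim_step a t (tau L) b H Hab) as [[_ [t1 [t' [A [B C]]]]]|[t' [t1 [t2 [A [B [C D]]]]]]].
    + exists t'; split; auto. eapply rt_trans; eapply reach_taus; eauto.
    + exists t'; split; auto. eapply rt_trans; [eapply reach_taus; eauto|].
      eapply rt_trans; [apply rt_step; exact B|eapply reach_taus; eauto].
  - exists t; split; auto. apply rt_refl.
  - destruct (IH1 t H) as [t1 [A B]]. destruct (IH2 t1 B) as [t2 [C D]].
    exists t2; split; auto. eapply rt_trans; eauto.
Qed.

Lemma rt_tp a b c : taus L a b -> taus_plus L b c -> taus_plus L a c.
Proof.
  unfold taus, taus_plus. induction 1; intros; auto.
  eapply t_trans; [apply t_step|]; eauto.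
Qed.

Lemma sim_refl s : sim s s.
Proof.
  apply (semi_sub eq); auto. split; [split|].
  - auto.
  - intros s0 t a s' <- Hst. right. exists s', s0, s'.
    split; [|split; [|split]]; auto; destruct x || destruct y; simpl;
      try (destruct y); simpl; repeat split; try apply rt_refl; auto.
  - intros s0 t <- f Hf0 Hf. exists (f 1), 1. split; auto.
    apply t_step. rewrite <- Hf0. apply Hf.
Qed.

Lemma reach_ext m (R' : relation (St L)) p u uX t1 :
  (forall a b, sim a b -> R' a b) -> R' p u -> taus L u uX ->
  gen_reach L m sim p uX t1 -> gen_reach L m R' p u t1.
Proof.
  intros Hs Hp Hu. destruct m; simpl.
  - intros; eapply rt_trans; eauto.
  - intros [A [B C]]. split; [eapply rt_trans; eauto|]. auto.
Qed.

Lemma sim_stutter t0 tk u : sim t0 u -> sim tk u -> forall X, taus L t0 X -> taus L X tk -> sim X u.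
Proof.
  intros H0 Hk X HX1 HX2.
  set (R' := fun p q => sim p q \/ (taus L t0 p /\ taus L p tk /\ q = u)
                        \/ (taus L t0 q /\ taus L q tk /\ p = u)).
  assert (Hsub : forall a b, sim a b -> R' a b) by (intros; left; auto).
  apply (semi_sub R'). 2: right; left; auto.
  split; [split|].
  - intros p q [H|[H|H]]; [left; apply sim_sym; auto|right;right|right;left]; tauto.
  - intros p q a p' HR Hst.
    destruct HR as [H|[[Hp1 [Hp2 ->]]|[Hq1 [Hq2 ->]]]].
    + destruct (sim_step _ _ _ _ H Hst) as [[Ha [t1 [t' [A [B C]]]]]|[t' [t1 [t2 [A [B [C D]]]]]]].
      * left; split; auto. exists t1, t'. split; [|split]; try eapply reach_mono; eauto.
      * right. exists t', t1, t2. split; [|split; [|split]]; try eapply reach_mono; eauto.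
    + destruct (sim_path _ _ Hp1 _ H0) as [uX [Hu HX]].
      destruct (sim_step _ _ _ _ HX Hst) as [[Ha [t1 [t' [A [B C]]]]]|[t' [t1 [t2 [A [B [C D]]]]]]].
      * left; split; auto. exists t1, t'. split; [|split].
        -- eapply reach_ext; eauto. right; left; auto.
        -- eapply reach_mono; eauto.
        -- auto.
      * right. exists t', t1, t2. split; [|split; [|split]]; auto.
        -- eapply reach_ext; eauto. right; left; auto.
        -- eapply reach_mono; eauto.
    + pose proof (sim_sym _ _ Hk) as Hk'.
      destruct (sim_step _ _ _ _ Hk' Hst) as [[Ha [t1 [t' [A [B C]]]]]|[t' [t1 [t2 [A [B [C D]]]]]]].
      * left; split; auto. exists t1, t'. split; [|split].
        -- eapply reach_ext; eauto. right; right; auto.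
        -- eapply reach_mono; eauto.
        -- auto.
      * right. exists t', t1, t2. split; [|split; [|split]]; auto.
        -- eapply reach_ext; eauto. right; right; auto.
        -- eapply reach_mono; eauto.
  - intros p q HR f Hf0 Hf.
    destruct HR as [H|[[Hp1 [Hp2 ->]]|[Hq1 [Hq2 ->]]]].
    + destruct (sim_div _ _ H f Hf0 Hf) as [t' [k [A B]]]. exists t', k; auto.
    + destruct (sim_path _ _ Hp1 _ H0) as [uX [Hu HX]].
      destruct (sim_div _ _ HX f Hf0 Hf) as [t' [k [A B]]].
      exists t', k; split; auto. eapply rt_tp; eauto.
    + destruct (sim_div _ _ (sim_sym _ _ Hk) f Hf0 Hf) as [t' [k [A B]]].
      exists t', k; split; auto. eapply rt_tp; eauto.
Qed.

Lemma gen_semi R : gen_bisim_ed L x y R -> semi_ed R.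
Proof.
  intros [[Hs Ht] Hd]. split; [split|]; auto.
  intros s t a s' H Hst.
  destruct (Ht _ _ _ _ H Hst) as [[Ha Hr]|Hr]; [left|right; auto].
  split; auto. exists t, t. split; [|split]; auto.
  - destruct x; simpl; repeat split; auto; apply rt_refl.
  - destruct y; simpl; repeat split; auto; apply rt_refl.
Qed.

Lemma sim_gen : gen_bisim_ed L x y sim.
Proof.
  split; [split|].
  - apply sim_sym.
  - intros s t a s' H Hst.
    destruct (sim_step _ _ _ _ H Hst) as [[Ha [t1 [t' [A [B C]]]]]|Hr]; [|right; exact Hr].
    subst a.
    pose proof (reach_taus _ _ _ _ _ A) as At.
    pose proof (reach_taus _ _ _ _ _ B) as Bt.
    unfold taus in At, Bt.
    apply clos_rt_rtn1_iff in At.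
    destruct At as [|T1 t1' HT1 HtT1].
    + apply clos_rt_rt1n_iff in Bt.
      destruct Bt as [|X t'' HX HXt].
      * left; auto.
      * right. exists t'', t, X. split; [|split; [|split]]; [| exact HX | | exact C].
        -- destruct x; simpl; repeat split; auto; apply rt_refl.
        -- apply clos_rt_rt1n_iff in HXt.
           destruct y; simpl in *; auto.
           destruct B as [_ [B1 B2]]. repeat split; auto.
           apply sim_sym. apply (sim_stutter t t'' s'); auto using sim_sym.
           apply rt_step; auto.
    + right. exists t', T1, t1'. split; [|split; [|split]]; [| exact HT1 | exact B | exact C].
      apply clos_rt_rtn1_iff in HtT1.
      destruct x; simpl in *; auto.
      destruct A as [_ [A1 A2]]. repeat split; auto.
      apply sim_sym. apply (sim_stutter t t1' s); auto using sim_sym.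
      apply rt_step; auto.
  - apply sim_div.
Qed.

End Aux.

Theorem lemma6p3 (L : LTS) (x y : mode) (k : nat) (t : nat -> St L) :
  (forall i, i < k -> tau_step L (t i) (t (S i))) ->
  bisim_ed L x y (t 0) (t k) ->
  forall i j, i <= k -> j <= k -> bisim_ed L x y (t i) (t j).
Proof.
  intros Hstep [R [HR Hr]] i j Hi Hj.
  assert (H0k : sim L x y (t 0) (t k)) by (apply (semi_sub L x y R); auto; apply gen_semi; auto).
  assert (Hpath : forall b a, a <= b -> b <= k -> taus L (t a) (t b)).
  { induction b; intros a Ha Hb.
    - assert (a = 0) by lia. subst; apply rt_refl.
    - destruct (Nat.eq_dec a (S b)) as [->|Hne]; [apply rt_refl|].
      eapply rt_trans; [apply IHb; lia|]. apply rt_step. apply Hstep; lia. }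
  assert (Hk : forall i, i <= k -> sim L x y (t i) (t k)).
  { intros i0 Hi0. apply (sim_stutter L x y (t 0) (t k)); auto using sim_refl; apply Hpath; lia. }
  assert (H0 : forall i, i <= k -> sim L x y (t i) (t 0)).
  { intros i0 Hi0. apply (sim_stutter L x y (t 0) (t k)); auto using sim_refl, sim_sym; apply Hpath; lia. }
  exists (sim L x y). split; [apply sim_gen|].
  apply (sim_stutter L x y (t 0) (t k)); auto using sim_sym; apply Hpath; lia.
Qed.
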